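(* Let $\gamma\in(0,1]$. Let $E$ be an e-value for a null hypothesis (nonnegative with $\mathbb E[E]\le1$ under the null), $F$ a nonnegative random variable, and $\hat\alpha\in[0,1]$ a data-dependent threshold, all mutually arbitrarily dependent. Let $U\sim\mathrm{Uniform}[0,1]$ be independent of $(E,F,\hat\alpha)$, let $T:=\mathbf 1\{U\le(1-\gamma F^{-1})_+\}$, and define $$\tilde E^{\mathrm{SR}}:=(1-T)F+T\cdot\frac{1-\gamma}{(1-\gamma F^{-1})_+}\cdot E,\qquad \tilde E:=(1-T)F+T(1-\gamma)E.$$ Then $T_{\hat\alpha}(\tilde E^{\mathrm{SR}}):=\hat\alpha^{-1}\mathbf 1\{\tilde E^{\mathrm{SR}}\ge\hat\alpha^{-1}\}$ is an e-value (its expectation under the null is at most $1$), and $\tilde E^{\mathrm{SR}}\ge\tilde E$ almost surely.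
   Context: $x_+=\max(x,0)$, with $(1-\gamma F^{-1})_+=0$ when $F=0$. On the event $T=1$, $(1-\gamma F^{-1})_+>0$ almost surely, so $\tilde E^{\mathrm{SR}}$ is well defined almost surely (the second term is taken as $0$ when $T=0$). *)

(* Defs.v *)
From HB Require Import structures.
From mathcomp Require Import all_boot all_order all_algebra.
From mathcomp Require Import all_classical all_reals all_analysis.
Set Implicit Arguments. Unset Strict Implicit. Unset Printing Implicit Defensive.
Import Order.TTheory GRing.Theory Num.Theory.
Local Open Scope classical_set_scope.
Local Open Scope ring_scope.

Definition pos_part_thr {R : realType} (gamma f : R) : R :=
  if f == 0 then 0 else Num.max 0 (1 - gamma / f).

Definition Tind {R : realType} (gamma f u : R) : R :=
  if u <= pos_part_thr gamma f then 1 else 0.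

Definition ESR {R : realType} (gamma e f u : R) : R :=
  (1 - Tind gamma f u) * f +
  (if Tind gamma f u == 1 then (1 - gamma) / pos_part_thr gamma f * e else 0).

Definition Etilde {R : realType} (gamma e f u : R) : R :=
  (1 - Tind gamma f u) * f + Tind gamma f u * (1 - gamma) * e.

Definition Talpha {R : realType} (alpha x : R) : R :=
  if alpha^-1 <= x then alpha^-1 else 0.

(* Independence of the random variable U from the random vector (X,Y,Z):
   product rule on the pi-system of measurable rectangles generating
   sigma(U) and sigma(X,Y,Z). *)
Definition indep_from3 {d} {T : measurableType d} {R : realType}
  (P : probability T R) (U X Y Z : T -> R) : Prop :=
  forall A B C D : set R, measurable A -> measurable B -> measurable C ->
    measurable D ->
    P (U @^-1` A `&` (X @^-1` B `&` Y @^-1` C `&` Z @^-1` D)) =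
    (P (U @^-1` A) * P (X @^-1` B `&` Y @^-1` C `&` Z @^-1` D))%E.

(* Main.v *)
Require Import Defs.
From HB Require Import structures.
From mathcomp Require Import all_boot all_order all_algebra.
From mathcomp Require Import all_classical all_reals all_analysis.
From mathcomp Require Import measurable_realfun.
Import Order.TTheory GRing.Theory Num.Theory.
Local Open Scope classical_set_scope.
Local Open Scope ring_scope.

Section meas.
Context (R : realType) d (X : measurableType d).
Implicit Types (f g : X -> R).

Lemma measurable_inv_R : measurable_fun [set: R] (@GRing.inv R).
Proof.
rewrite (_ : GRing.inv = (fun x : R => if x == 0 then 0 else x^-1)); last first.
  by apply/funext => x; case: eqP => // ->; rewrite invr0.
apply: measurable_fun_if => //.
- apply: measurable_fun_eqr => //; exact: measurable_cst.
- rewrite setTI (_ : _ @^-1` _ = [set x : R | x != 0]); last first.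
    by apply/seteqP; split => x /=; case: eqP.
  apply: open_continuous_measurable_fun.
    exact: (@open_neq R 0).
  by apply/in_setP => x /= x0; exact: inv_continuous.
Qed.

Lemma mfV f : measurable_fun setT f -> measurable_fun setT (fun x => (f x)^-1).
Proof. by move=> mf; apply: measurableT_comp => //; exact: measurable_inv_R. Qed.

Lemma mf_if (b : X -> bool) f g : measurable_fun setT b ->
  measurable_fun setT f -> measurable_fun setT g ->
  measurable_fun setT (fun x => if b x then f x else g x).
Proof. by move=> mb mf mg; exact: measurable_fun_ifT. Qed.

Lemma mf_pos (gamma : R) f : measurable_fun setT f ->
  measurable_fun setT (fun x => pos_part_thr gamma (f x)).
Proof.
move=> mf; rewrite /pos_part_thr; apply: mf_if.
- by apply: measurable_fun_eqr => //; exact: measurable_cst.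
- exact: measurable_cst.
- apply: (measurable_maxr (f := cst 0)); first exact: measurable_cst.
  apply: measurable_funB; first exact: measurable_cst.
  apply: (measurable_funM (f := cst gamma)); first exact: measurable_cst.
  exact: mfV.
Qed.

Lemma mf_Tind (gamma : R) f u : measurable_fun setT f -> measurable_fun setT u ->
  measurable_fun setT (fun x => Tind gamma (f x) (u x)).
Proof.
move=> mf mu; rewrite /Tind; apply: mf_if; last 2 first.
- exact: measurable_cst.
- exact: measurable_cst.
by apply: measurable_fun_ler => //; exact: mf_pos.
Qed.

Lemma mf_ESR (gamma : R) e f u : measurable_fun setT e ->
  measurable_fun setT f -> measurable_fun setT u ->
  measurable_fun setT (fun x => ESR gamma (e x) (f x) (u x)).
Proof.
move=> me mf mu; rewrite /ESR; apply: measurable_funD.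
  apply: measurable_funM => //; apply: measurable_funB; first exact: measurable_cst.
  exact: mf_Tind.
apply: mf_if.
- by apply: measurable_fun_eqr; [exact: mf_Tind|exact: measurable_cst].
- apply: measurable_funM => //; apply: (measurable_funM (f := cst (1 - gamma))).
    exact: measurable_cst.
  by apply: mfV; exact: mf_pos.
- exact: measurable_cst.
Qed.

Lemma mf_Talpha (a y : X -> R) : measurable_fun setT a -> measurable_fun setT y ->
  measurable_fun setT (fun x => Talpha (a x) (y x)).
Proof.
move=> ma my; rewrite /Talpha; apply: mf_if.
- by apply: measurable_fun_ler => //; exact: mfV.
- exact: mfV.
- exact: measurable_cst.
Qed.

End meas.

Section reals.
Context (R : realType).
Implicit Types (gamma e f a u y : R).

Lemma ESR_E gamma e f u : ESR gamma e f u =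
  if u <= pos_part_thr gamma f then (1 - gamma) / pos_part_thr gamma f * e else f.
Proof.
rewrite /ESR /Tind; case: ifP => _; rewrite ?eqxx.
  by rewrite subrr mul0r add0r.
by rewrite subr0 mul1r eq_sym oner_eq0 addr0.
Qed.

Lemma pos_ge0 gamma f : 0 <= pos_part_thr gamma f.
Proof. by rewrite /pos_part_thr; case: ifP => // _; rewrite le_max lexx. Qed.

Lemma pos_le1 gamma f : 0 < gamma -> 0 <= f -> pos_part_thr gamma f <= 1.
Proof.
move=> g0 f0; rewrite /pos_part_thr; case: ifP => // /negbT fn0.
rewrite ge_max ler01 /= lerBlDr lerDl divr_ge0 // ltW //.
Qed.

Lemma Talpha_ge0 a y : 0 <= a -> 0 <= Talpha a y.
Proof. by move=> a0; rewrite /Talpha; case: ifP => // _; rewrite invr_ge0. Qed.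

Lemma Talpha_le a y : 0 <= y -> Talpha a y <= y.
Proof. by move=> y0; rewrite /Talpha; case: ifP. Qed.

Lemma inner_bound gamma e f a : 0 < gamma <= 1 -> 0 <= e -> 0 <= f ->
  0 <= a <= 1 ->
  Talpha a ((1 - gamma) / pos_part_thr gamma f * e) * pos_part_thr gamma f +
  Talpha a f * (1 - pos_part_thr gamma f) <= gamma + (1 - gamma) * e.
Proof.
move=> /andP[g0 g1] e0 f0 /andP[a0 a1].
set p := pos_part_thr gamma f.
have p0 : 0 <= p by exact: pos_ge0.
have p1 : p <= 1 by exact: pos_le1.
rewrite addrC; apply: lerD.
  rewrite /Talpha; case: ifP => ha; last by rewrite mul0r ltW.
  have [->|a_ne0] := eqVneq a 0; first by rewrite invr0 mul0r ltW.
  have a_gt0 : 0 < a by rewrite lt_neqAle eq_sym a_ne0.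
  have ia1 : 1 <= a^-1 by rewrite invr_ge1 // ?unitf_gt0.
  have f1 : 1 <= f by apply: le_trans ha.
  have fn0 : f != 0 by rewrite gt_eqF // (lt_le_trans ltr01).
  have gf : gamma / f <= 1 by rewrite ler_pdivrMr ?mul1r ?(lt_le_trans ltr01) // (le_trans g1).
  have -> : p = 1 - gamma / f.
    by rewrite /p /pos_part_thr (negbTE fn0); apply/max_idPr; rewrite subr_ge0.
  rewrite opprB addrCA subrr addr0 mulrA mulrAC.
  have : a^-1 / f <= 1 by rewrite ler_pdivrMr ?mul1r // (lt_le_trans ltr01).
  move=> h; rewrite -[X in _ <= X]mul1r ler_wpM2r //; first exact: ltW.
have [->|p_ne0] := eqVneq p 0; first by rewrite mulr0 mulr_ge0 // subr_ge0.
have p_gt0 : 0 < p by rewrite lt_neqAle eq_sym p_ne0.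
apply: (@le_trans _ _ ((1 - gamma) / p * e * p)).
  apply: ler_wpM2r => //; apply: Talpha_le.
  by rewrite mulr_ge0 // divr_ge0 // subr_ge0.
by rewrite mulrAC divfK.
Qed.

Lemma Etilde_le gamma e f u : 0 < gamma <= 1 -> 0 <= e -> 0 <= f -> 0 < u ->
  Etilde gamma e f u <= ESR gamma e f u.
Proof.
move=> /andP[g0 g1] e0 f0 u0; rewrite ESR_E /Etilde /Tind.
case: ifP => hu; last by rewrite subr0 mul1r mul0r mul0r addr0.
set p := pos_part_thr gamma f in hu *.
have p0 : 0 < p by exact: lt_le_trans hu.
have p1 : p <= 1 by exact: pos_le1.
rewrite subrr mul0r add0r mul1r ler_wpM2r //.
rewrite -[X in X <= _]mulr1 ler_wpM2l ?subr_ge0 //.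
by rewrite invr_ge1 // unitf_gt0.
Qed.

End reals.

Section gen_prod.
Context d1 d2 (T1 : measurableType d1) (T2 : measurableType d2).
Variables (H1 : set (set T1)) (H2 : set (set T2)).
Hypotheses (m1 : @measurable _ T1 = <<s H1>>) (m2 : @measurable _ T2 = <<s H2>>).
Hypotheses (h1 : H1 setT) (h2 : H2 setT).

Let G := [set A `*` B | A in H1 & B in H2].
Let M := g_sigma_algebraType G.

Let L1 A : measurable A -> <<s G >> (A `*` [set: T2]).
Proof.
rewrite m1; move: A; apply: smallest_sub.
- split.
  + by rewrite set0X; exact: (@measurable0 _ M).
  + move=> A hA; rewrite (_ : _ `*` _ = ~` (A `*` [set: T2])); last first.
      by apply/seteqP; split; move=> [x y] /=; rewrite /setX /=; tauto.
    exact: (@measurableC _ M).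
  + move=> F hF; rewrite (_ : _ `*` _ = \bigcup_k (F k `*` [set: T2])); last first.
      by apply/seteqP; split=> [[x y] [[k _ ?] _]|[x y] [k _ [? _]]]; [exists k|split=> //; exists k].
    exact: (@bigcupT_measurable _ M).
- by move=> A hA; apply: sub_sigma_algebra; exists A => //; exists setT.
Qed.

Let L2 B : measurable B -> <<s G >> ([set: T1] `*` B).
Proof.
rewrite m2; move: B; apply: smallest_sub.
- split.
  + by rewrite setX0; exact: (@measurable0 _ M).
  + move=> A hA; rewrite (_ : _ `*` _ = ~` ([set: T1] `*` A)); last first.
      by apply/seteqP; split; move=> [x y] /=; rewrite /setX /=; tauto.
    exact: (@measurableC _ M).
  + move=> F hF; rewrite (_ : _ `*` _ = \bigcup_k ([set: T1] `*` F k)); last first.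
      by apply/seteqP; split=> [[x y] [_ [k _ ?]]|[x y] [k _ [_ ?]]]; [exists k|split=> //; exists k].
    exact: (@bigcupT_measurable _ M).
- by move=> B hB; apply: sub_sigma_algebra; exists setT => //; exists B.
Qed.

Lemma gen_prod : @measurable _ (T1 * T2)%type = <<s G >>.
Proof.
rewrite measurable_prod_measurableType; apply/seteqP; split.
- apply: smallest_sub; first exact: smallest_sigma_algebra.
  move=> _ [A mA] [B mB] <-.
  rewrite (_ : A `*` B = (A `*` setT) `&` (setT `*` B)); last first.
    by apply/seteqP; split; move=> [x y]; rewrite /setX /=; tauto.
  have := @measurableI _ M (A `*` setT) (setT `*` B) (L1 A mA) (L2 B mB).
  exact.
- apply: smallest_sub; first exact: smallest_sigma_algebra.
  move=> _ [A hA] [B hB] <-; apply: sub_sigma_algebra; exists A.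
    by rewrite m1; exact: sub_sigma_algebra.
  by exists B => //; rewrite m2; exact: sub_sigma_algebra.
Qed.

End gen_prod.

Section unif.
Context (R : realType).
Local Notation unif := (uniform_prob (@ltr01 R)).

Lemma unif_le (p : R) : 0 <= p <= 1 -> unif `]-oo, p]%classic = p%:E.
Proof.
move=> /andP[p0 p1].
rewrite /uniform_prob integral_uniform_pdf.
rewrite (_ : `]-oo, p]%classic `&` `[0, 1]%classic = `[0, p]%classic); last first.
  apply/seteqP; split => x /=; rewrite !in_itv /= ?andbT.
    by move=> [xp /andP[-> _]].
  by move=> /andP[x0 xp]; split => //; rewrite x0 (le_trans xp).
rewrite (eq_integral (fun _ => 1%:E)); last first.
  move=> x; rewrite inE /= in_itv /= => /andP[x0 xp].
  by rewrite /uniform_pdf x0 (le_trans xp) // subr0 invr1.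
rewrite integral_cst //= lebesgue_measure_itv /= lte_fin mul1e.
case: ifPn => [_|]; first by rewrite oppr0 adde0.
by rewrite -leNgt => hp; have -> : p = 0 by apply/eqP; rewrite eq_le hp p0.
Qed.

End unif.

Section inner.
Context (R : realType) (unif : probability R R).
Hypothesis unif_le : forall p : R, (0 <= p <= 1)%R -> unif `]-oo, p]%classic = p%:E.
Local Open Scope ereal_scope.

Lemma inner_int (p c1 c2 : R) : (0 <= p <= 1)%R -> (0 <= c1)%R -> (0 <= c2)%R ->
  \int[unif]_u (if u <= p then c1 else c2)%:E = (c1 * p + c2 * (1 - p))%:E.
Proof.
move=> hp c10 c20.
set A := `]-oo, p]%classic.
have mA : measurable A by exact: measurable_itv.
transitivity (\int[unif]_u (c1%:E * (\1_A u)%:E + c2%:E * (\1_(~` A) u)%:E)).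
  apply: eq_integral => u _; rewrite !indicE; case: ifPn => hu.
    have -> : u \in A by rewrite inE /A /= in_itv /= hu.
    have -> : u \in ~` A = false.
      by apply/negbTE; rewrite notin_setE /A /=; rewrite in_itv /= hu.
    by rewrite mule1 mule0 adde0.
  have -> : u \in A = false by apply/negbTE; rewrite notin_setE /A /= in_itv /=; exact/negP.
  have -> : u \in ~` A.
    by rewrite inE /A /= in_itv /=; exact/negP.
  by rewrite mule1 mule0 add0e.
rewrite ge0_integralD //; last 4 first.
- by move=> u _; rewrite mule_ge0 // lee_fin.
- apply: measurable_funeM; apply/measurable_EFinP; exact: measurable_indic.
- by move=> u _; rewrite mule_ge0 // lee_fin.
- apply: measurable_funeM; apply/measurable_EFinP; apply: measurable_indic.
  exact: measurableC.
rewrite !ge0_integralZl //; try (by move=> u _; rewrite lee_fin); try (by rewrite lee_fin);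
  try (apply/measurable_EFinP; apply: measurable_indic; exact: measurableC);
  try (apply/measurable_EFinP; exact: measurable_indic).
have I1 : \int[unif]_x (\1_A x)%:E = p%:E.
  rewrite (@integral_indic _ _ _ unif setT measurableT A mA) setIT.
  exact: unif_le _ hp.
have I2 : \int[unif]_x (\1_(~` A) x)%:E = (1 - p)%:E.
  rewrite (@integral_indic _ _ _ unif setT measurableT (~` A) (measurableC mA)) setIT.
  apply: (etrans (@probability_setC _ _ _ unif A mA)).
  by rewrite /A (unif_le _ hp) EFinB.
rewrite EFinD !EFinM; congr (_ * _ + _ * _); [exact: I1|exact: I2].
Qed.

End inner.

Section main.
Context (R : realType) (d : measure_display) (T : measurableType d)
  (P : probability T R) (E F alpha U : {RV P >-> R}).

Definition Xf (w : T) : R * (R * R) := (E w, (F w, alpha w)).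

Lemma mXf : measurable_fun setT Xf.
Proof.
apply: measurable_fun_pair; first exact: measurable_funPT.
by apply: measurable_fun_pair; exact: measurable_funPT.
Qed.

HB.instance Definition _ := isMeasurableFun.Build _ _ _ _ Xf mXf.

Definition Vf (w : T) : (R * (R * R)) * R := (Xf w, U w).

Lemma mVf : measurable_fun setT Vf.
Proof. by apply: measurable_fun_pair; [exact: mXf|exact: measurable_funPT]. Qed.

HB.instance Definition _ := isMeasurableFun.Build _ _ _ _ Vf mVf.

Local Notation muU := (distribution P U).
Local Notation nu := (distribution P Xf).

Let G2 := [set C `*` D | C in @measurable _ R & D in @measurable _ R].
Let G3 := [set B `*` S | B in @measurable _ R & S in G2].
Let G := [set S `*` A | S in G3 & A in @measurable _ R].

Let mG3 : @measurable _ (R * (R * R))%type = <<s G3 >>.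
Proof.
apply: gen_prod.
- by rewrite smallest_id //; exact: sigma_algebra_measurable.
- exact: measurable_prod_measurableType.
- exact: measurableT.
- by exists setT => //; exists setT => //; rewrite setXTT.
Qed.

Let mG : @measurable _ ((R * (R * R)) * R)%type = <<s G >>.
Proof.
apply: gen_prod.
- exact: mG3.
- by rewrite smallest_id //; exact: sigma_algebra_measurable.
- by exists setT => //; exists setT => //; rewrite ?setXTT //; exists setT => //; exists setT => //; rewrite setXTT.
- exact: measurableT.
Qed.

Let setIG : setI_closed G.
Proof.
move=> X Y [_ [B mB [_ [C mC [D mD <-]] <-]] [A mA <-]].
move=> [_ [B' mB' [_ [C' mC' [D' mD' <-]] <-]] [A' mA' <-]].
rewrite -setXI -setXI -setXI.
exists ((B `&` B') `*` ((C `&` C') `*` (D `&` D'))); last first.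
  by exists (A `&` A') => //; exact: measurableI.
exists (B `&` B'); first exact: measurableI.
exists ((C `&` C') `*` (D `&` D')) => //; exists (C `&` C'); first exact: measurableI.
by exists (D `&` D') => //; exact: measurableI.
Qed.

Lemma law_prod :
  indep_from3 P U E F alpha ->
  forall W, measurable W -> distribution P Vf W = (nu \x muU)%E W.
Proof.
move=> hind.
apply: (measure_unique G (fun=> setT)) => //.
- move=> _; exists (setT `*` (setT `*` setT)); last by exists setT => //; rewrite !setXTT.
  by exists setT => //; exists (setT `*` setT) => //; exists setT => //; exists setT.
- by rewrite bigcup_const.
- move=> _ [_ [B mB [_ [C mC [D mD <-]] <-]] [A mA <-]].
  apply: esym; apply: (etrans (product_measure1E nu muU (measurableX mB (measurableX mC mD)) mA)).
  apply: esym.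
  change (P (Vf @^-1` ((B `*` (C `*` D)) `*` A)) = (P (Xf @^-1` (B `*` (C `*` D))) * P (U @^-1` A))%E).
  have -> : Vf @^-1` ((B `*` (C `*` D)) `*` A) =
      U @^-1` A `&` (E @^-1` B `&` F @^-1` C `&` alpha @^-1` D).
    by apply/seteqP; split => w /=; rewrite /Vf /Xf /setX /=; tauto.
  rewrite hind // muleC; congr (_ * _)%E.
  by congr (P _); apply/seteqP; split => w /=; rewrite /Xf /setX /=; tauto.
- by move=> k; apply: (@le_lt_trans _ _ 1%E); [exact: probability_le1|exact: ltry].
Qed.

Definition cl (x : R * (R * R)) : R * (R * R) :=
  (Num.max x.1 0, (Num.max x.2.1 0, Num.min (Num.max x.2.2 0) 1)).

Definition hfun (gamma : R) (z : (R * (R * R)) * R) : \bar R :=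
  (Talpha (cl z.1).2.2 (ESR gamma (cl z.1).1 (cl z.1).2.1 z.2))%:E.

Lemma m11 : measurable_fun setT (fun z : (R * (R * R)) * R => z.1.1).
Proof. exact: measurableT_comp measurable_fst measurable_fst. Qed.
Lemma m121 : measurable_fun setT (fun z : (R * (R * R)) * R => z.1.2.1).
Proof.
apply: measurableT_comp measurable_fst _.
exact: measurableT_comp measurable_snd measurable_fst.
Qed.
Lemma m122 : measurable_fun setT (fun z : (R * (R * R)) * R => z.1.2.2).
Proof.
apply: measurableT_comp measurable_snd _.
exact: measurableT_comp measurable_snd measurable_fst.
Qed.
Lemma m2_ : measurable_fun setT (fun z : (R * (R * R)) * R => z.2).
Proof. exact: measurable_snd. Qed.

Lemma mhfun gamma : measurable_fun setT (hfun gamma).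
Proof.
apply/measurable_EFinP; apply: mf_Talpha.
  apply: measurable_minr; last exact: measurable_cst.
  by apply: measurable_maxr; [exact: m122|exact: measurable_cst].
apply: mf_ESR => //.
  by apply: measurable_maxr; [exact: m11|exact: measurable_cst].
by apply: measurable_maxr; [exact: m121|exact: measurable_cst].
Qed.

Lemma hfun_ge0 gamma z : (0 <= hfun gamma z)%E.
Proof.
rewrite lee_fin; apply: Talpha_ge0.
by rewrite /cl /= le_min ler01 le_max lexx orbT.
Qed.

Lemma main_bound (gamma : R) :
  0 < gamma <= 1 ->
  (forall w, 0 <= E w) -> ('E_P[E] <= 1)%E ->
  (forall w, 0 <= F w) ->
  (forall w, 0 <= alpha w <= 1) ->
  (forall A, measurable A -> distribution P U A = uniform_prob (@ltr01 R) A) ->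
  indep_from3 P U E F alpha ->
  (\int[P]_w (Talpha (alpha w) (ESR gamma (E w) (F w) (U w)))%:E <= 1)%E.
Proof.
move=> hg hE0 hEE hF0 ha hU hind.
have clX w : cl (Xf w) = Xf w.
  rewrite /cl /Xf /=; have /andP[a0 a1] := ha w.
  by rewrite (max_idPl (hE0 w)) (max_idPl (hF0 w)) (max_idPl a0) (min_idPl a1).
have -> : (\int[P]_w (Talpha (alpha w) (ESR gamma (E w) (F w) (U w)))%:E =
    \int[P]_w (hfun gamma \o Vf) w)%E.
  apply: eq_integral => w _; rewrite /hfun /=; have /andP[a0 a1] := ha w.
  by rewrite (max_idPl (hE0 w)) (max_idPl (hF0 w)) (max_idPl a0) (min_idPl a1).
rewrite -(ge0_integral_distribution Vf (mhfun gamma) (hfun_ge0 gamma)).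
have -> : (\int[distribution P Vf]_z hfun gamma z = \int[(nu \x muU)%E]_z hfun gamma z)%E.
  by apply: eq_measure_integral => A mA _; exact: law_prod.
rewrite (fubini_tonelli1 (hfun gamma) (mhfun gamma) (hfun_ge0 gamma)).
have muU_le : forall p : R, 0 <= p <= 1 -> muU `]-oo, p]%classic = p%:E.
  by move=> p hp; rewrite hU //; exact: unif_le.
have hg0 : 0 <= gamma by case/andP: hg => /ltW.
have hg1 : 0 <= 1 - gamma by case/andP: hg => _; rewrite subr_ge0.
have mb : measurable_fun setT (fun x : R * (R * R) => (gamma + (1 - gamma) * Num.max x.1 0)%:E).
  apply/measurable_EFinP; apply: measurable_funD; first exact: measurable_cst.
  apply: measurable_funM; first exact: measurable_cst.
  apply: measurable_maxr; first exact: measurable_fst.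
  exact: measurable_cst.
have b0 : forall x : R * (R * R), (0 <= (gamma + (1 - gamma) * Num.max x.1 0)%:E)%E.
  by move=> x; rewrite lee_fin addr_ge0 // mulr_ge0 // le_max lexx orbT.
apply: (@le_trans _ _ (\int[nu]_x ((gamma + (1 - gamma) * Num.max x.1 0)%:E))%E).
  apply: ge0_le_integral => //.
  - by move=> x _; apply: integral_ge0 => u _; exact: hfun_ge0.
  - exact: (measurable_fun_fubini_tonelli_F (hfun gamma) (mhfun gamma) (hfun_ge0 gamma)).
  move=> [e [f a]] _; rewrite /fubini_F /=.
  set e' := Num.max e 0; set f' := Num.max f 0; set a' := Num.min (Num.max a 0) 1.
  set p := pos_part_thr gamma f'.
  have -> : (\int[muU]_u hfun gamma (e, (f, a), u) =
      \int[muU]_u (if u <= p then Talpha a' ((1 - gamma) / p * e') else Talpha a' f')%:E)%E.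
    by apply: eq_integral => u _; rewrite /hfun /= ESR_E; case: ifP.
  have e0 : 0 <= e' by rewrite le_max lexx orbT.
  have f0 : 0 <= f' by rewrite le_max lexx orbT.
  have a01 : 0 <= a' <= 1 by rewrite /a' le_min ler01 le_max lexx orbT /= ge_min lexx orbT.
  have hp : 0 <= p <= 1 by rewrite pos_ge0 pos_le1 //; case/andP: hg.
  rewrite (@inner_int R muU muU_le _ _ _ hp); [|exact: Talpha_ge0 (andP a01).1|exact: Talpha_ge0 (andP a01).1].
  by rewrite lee_fin; exact: inner_bound.
rewrite (ge0_integral_distribution Xf mb b0).
have -> : (\int[P]_w ((fun x : R * (R * R) => (gamma + (1 - gamma) * Num.max x.1 0)%:E) \o Xf) w
    = \int[P]_w (gamma%:E + (1 - gamma)%:E * (E w)%:E))%E.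
  by apply: eq_integral => w _; rewrite /= (max_idPl (hE0 w)) EFinD EFinM.
rewrite ge0_integralD //; try by [move=> w _; rewrite lee_fin
  | move=> w _; rewrite mule_ge0 // lee_fin
  | apply: measurable_funeM; apply/measurable_EFinP; exact: measurable_funPT].
rewrite ge0_integralZl //; try by [move=> w _; rewrite lee_fin | rewrite lee_fin
  | apply/measurable_EFinP; exact: measurable_funPT].
rewrite integral_cst //.
set Ps := (X in (gamma%:E * X)%E).
have -> : Ps = 1%E by exact: probability_setT.
rewrite mule1.
apply: (@le_trans _ _ (gamma%:E + (1 - gamma)%:E * 1))%E.
  apply: leeD2l; apply: lee_wpmul2l; first by rewrite lee_fin.
  by move: hEE; rewrite unlock.
by rewrite mule1 -EFinD addrC subrK.
Qed.

Lemma ae_part (gamma : R) :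
  0 < gamma <= 1 ->
  (forall w, 0 <= E w) -> (forall w, 0 <= F w) ->
  (forall A, measurable A -> distribution P U A = uniform_prob (@ltr01 R) A) ->
  {ae P, forall w, Etilde gamma (E w) (F w) (U w) <= ESR gamma (E w) (F w) (U w)}.
Proof.
move=> hg hE0 hF0 hU.
exists (U @^-1` `]-oo, 0]%classic); split.
- rewrite -[X in measurable X]setTI; apply: measurable_funPT => //.
- change (muU `]-oo, 0]%classic = 0%E).
  by rewrite hU // unif_le // lexx ler01.
- move=> w /= nle; rewrite in_itv /= leNgt; apply/negP => u0; apply: nle.
  exact: Etilde_le.
Qed.

End main.

Theorem proposition9 (R : realType) (d : measure_display) (T : measurableType d)
  (P : probability T R) (gamma : R) (E F alpha U : {RV P >-> R}) :
  0 < gamma <= 1 ->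
  (forall w, 0 <= E w) -> ('E_P[E] <= 1)%E ->
  (forall w, 0 <= F w) ->
  (forall w, 0 <= alpha w <= 1) ->
  (forall A, measurable A -> distribution P U A = uniform_prob (@ltr01 R) A) ->
  indep_from3 P U E F alpha ->
  (\int[P]_w (Talpha (alpha w) (ESR gamma (E w) (F w) (U w)))%:E <= 1)%E /\
  {ae P, forall w, Etilde gamma (E w) (F w) (U w) <= ESR gamma (E w) (F w) (U w)}.
Proof.
move=> hg hE0 hEE hF0 ha hU hind; split.
  exact: main_bound.
exact: ae_part.
Qed.
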